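(* Let $m/n\in(0,1/2)$, $\mathrm{LFS}(m/n)=(0=u_1/v_1,\dots,u_\alpha/v_\alpha)$, and let the elements of $\mathcal A_{m/n}$ be $0=k_1<k_2<\cdots<k_\alpha=m-1$. Then $\#\mathcal O_{m/n}[k_i,0]=v_i$ for each $i$. In particular, the elements of $\mathcal A_{m/n}$ appear in decreasing order along the orbit segment $\mathcal O_{m/n}[m,0]$.
   Context: Rationals in lowest terms. $\mathrm{LFP}(h/k)$ is the element immediately preceding $h/k$ in the increasing list of rationals in $[0,1/2]$ with denominator at most $k$; $\mathrm{LFS}(m/n)=(0=u_1/v_1,\dots,u_\alpha/v_\alpha)$ with $u_\alpha/v_\alpha=\mathrm{LFP}(m/n)$ and $u_i/v_i=\mathrm{LFP}(u_{i+1}/v_{i+1})$. $+_n$ is addition mod $n$; $\mathcal O_{m/n}[r,s]=\{r+_njm\colon0\le j\le K\}$ with $K\ge0$ least such that $r+_nKm=s$ (an orbit segment ordered by $j$). $k\in[0,m-1]$ is $m/n$-admissible if $\{k+1,\dots,m-1\}\cap\mathcal O_{m/n}[k,0]=\emptyset$; $\mathcal A_{m/n}$ is the set of such $k$ (it has exactly $\alpha$ elements, including $0$ and $m-1$). *)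

(* Defs.v *)
From mathcomp Require Import all_boot all_order all_algebra.
Set Implicit Arguments. Unset Strict Implicit. Unset Printing Implicit Defensive.
Import Order.TTheory GRing.Theory Num.Theory.

Definition farey_half (k : nat) : seq rat :=
  [seq q <- [seq (i%:R / d%:R : rat) | d <- iota 1 k, i <- iota 0 d.+1]
     | (0 <= q) && (q <= 1/2)]%R.

(* LFP(x): the element immediately preceding x in the increasing list of
   rationals in [0,1/2] with denominator at most denq x, i.e. the largest such
   rational strictly below x. *)
Definition LFP (x : rat) : rat :=
  foldr Num.max 0%R [seq q <- farey_half `|denq x|%N | (q < x)%R].

(* LFS(x) = (0 = u_1/v_1, ..., u_alpha/v_alpha) with u_alpha/v_alpha = LFP x
   and u_i/v_i = LFP(u_{i+1}/v_{i+1}).  Recursion: LFS(0) = [::],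
   LFS(x) = LFS(LFP x) ++ [:: LFP x] for x <> 0 (fuel is only for termination;
   the denominator strictly decreases at each step). *)
Fixpoint LFS_aux (fuel : nat) (x : rat) : seq rat :=
  match fuel with
  | 0 => [::]
  | f.+1 => if x == 0%R then [::] else rcons (LFS_aux f (LFP x)) (LFP x)
  end.

Definition LFS (x : rat) : seq rat := LFS_aux (`|denq x|%N ^ 2).+1 x.

(* K >= 0 least with r +_n K m = s (all arithmetic mod n); if gcd(m,n)=1 such K < n. *)
Definition orbK (m n r s : nat) : nat :=
  find (fun j => (r + j * m) %% n == s %% n) (iota 0 n).

Definition orbit_seg (m n r s : nat) : seq nat :=
  [seq (r + j * m) %% n | j <- iota 0 (orbK m n r s).+1].

Definition admissible (m n k : nat) : bool :=
  (k < m) && ~~ has (fun x => (k < x) && (x < m)) (orbit_seg m n k 0).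

Definition adm_list (m n : nat) : seq nat := [seq k <- iota 0 m | admissible m n k].

(* Main.v *)
Require Import Defs.
From mathcomp Require Import all_boot all_order all_algebra.
From mathcomp Require Import zify.
Import Order.TTheory GRing.Theory Num.Theory.
Set Implicit Arguments. Unset Strict Implicit.
Lemma inj_mod m n r j j' : coprime m n -> j < n -> j' < n ->
  (r + j * m) %% n = (r + j' * m) %% n -> j = j'.
Proof.
move=> cop.
wlog le: j j' / j <= j'.
  move=> W hj hj' E; case: (leqP j j') => h; first exact: W.
  by apply/esym; apply: W => //; [exact: ltnW].
move=> hj hj' E.
have [d Hd] : exists d, j' = j + d by exists (j' - j); lia.
subst j'.
have : (r + j * m + d * m == r + j * m + 0 %[mod n]).
  by rewrite addn0 -addnA -mulnDl E.
rewrite eqn_modDl mod0n => /eqP H.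
have : n %| d * m by rewrite /dvdn H.
rewrite Gauss_dvdl; last by rewrite coprime_sym.
clear le E; case: d H hj' => [|d] H hj'; first by rewrite addn0.
move/dvdn_leq => /(_ isT); lia.
Qed.

Lemma inv_exists p q : 0 < p -> 1 < q -> coprime p q ->
  exists v, [/\ 0 < v, v < q & (v * p) %% q = 1].
Proof.
move=> p0 q1 cop.
case: (egcdnP q p0) => km kn E _.
move: cop; rewrite /coprime => /eqP g1; rewrite g1 in E.
exists (km %% q).
have H : (km %% q * p) %% q = 1.
  by rewrite modnMml E modnMDl modn_small.
split => //; last by rewrite ltn_mod; lia.
case: (km %% q) H => //. by rewrite mul0n mod0n.
Qed.

Lemma sum_mod a b c n : a < n -> b < n -> c < n -> (a + b) %% n = c ->
  a + b = c \/ a + b = c + n.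
Proof.
move=> ha hb hc E.
case: (ltnP (a + b) n) => h; first by left; rewrite -E modn_small.
right. have -> : a + b = (a + b - n) + n by lia.
move: E; have -> : a + b = (a + b - n) + n by lia.
rewrite modnDr modn_small; lia.
Qed.
Lemma key_formula p q u v y : p * v = q * u + 1 -> 0 < v -> v <= q -> y < v ->
  v * (y * p %% q) = q * (y * u %% v) + y.
Proof.
move=> E v0 vq yv.
have q0 : 0 < q by lia.
have H1 := divn_eq (y * p) q. have H2 := divn_eq (y * u) v.
have L1 : y * p %% q < q by rewrite ltn_mod.
have L2 : y * u %% v < v by rewrite ltn_mod.
move: H1 H2 L1 L2.
set X := y * p %% q; set B := y * p %/ q; set a := y * u %% v; set b := y * u %/ v.
move=> H1 H2 L1 L2.
have E2 : v * B * q + v * X = q * b * v + q * a + y.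
  have : v * (y * p) = q * (y * u) + y.
    by rewrite (_ : v * (y * p) = y * (p * v)); [rewrite E; lia | lia].
  rewrite H1 H2. lia.
have BB : B = b.
  case: (ltngtP B b) => // h.
  - have : q * b * v >= q * B * v + q * v.
      have : b >= B.+1 by []. move=> hb. 
      have : q * b * v >= q * B.+1 * v by rewrite leq_mul2r leq_mul2l hb !orbT.
      lia.
    have : v * X < v * q by rewrite ltn_pmul2l.
    lia.
  - have : v * B * q >= v * b * q + v * q.
      have : q * B * v >= q * b.+1 * v by rewrite leq_mul2r leq_mul2l h !orbT.
      lia.
    have : q * a <= q * (v - 1) by rewrite leq_mul2l; lia.
    lia.
subst B. lia.
Qed.

Definition recb p q v := all (fun x => v * p %% q < x * p %% q) (iota 1 v.-1).
Definition Rec p q := [seq v <- iota 1 q.-1 | recb p q v].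

Lemma cmp_lemma q ax ay x y : x < q -> y < q -> ax != ay ->
  (q * ax + x < q * ay + y) = (ax < ay).
Proof.
move=> xq yq ne.
case: (ltngtP ax ay) => h.
- have : q * ax.+1 <= q * ay by rewrite leq_mul2l h orbT.
  lia.
- have : q * ay.+1 <= q * ax by rewrite leq_mul2l h orbT.
  lia.
- by rewrite h eqxx in ne.
Qed.

Lemma mod_nz p q y : coprime p q -> 0 < y -> y < q -> y * p %% q != 0.
Proof.
move=> cop y0 yq; apply/eqP => H.
have := @inj_mod p q 0 y 0 cop yq (leq_ltn_trans (leq0n _) yq).
rewrite mul0n !add0n mod0n => /(_ H); lia.
Qed.

Lemma Rec_step p q u v : coprime p q -> coprime u v -> 1 < q ->
  p * v = q * u + 1 -> 0 < v -> v < q ->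
  Rec p q = rcons (Rec u v) v.
Proof.
move=> cpq cuv q1 E v0 vq.
have vp1 : v * p %% q = 1.
  by rewrite mulnC E mulnC modnMDl modn_small.
rewrite /Rec.
have -> : q.-1 = v.-1 + (1 + (q.-1 - v)) by lia.
rewrite iotaD filter_cat -cats1; congr (_ ++ _); last first.
have -> : 1 + v.-1 = v by lia.
rewrite [iota _ _]/= [filter _ _]/=.
have -> : recb p q v.
  apply/allP => y; rewrite mem_iota => /andP [y1 y2].
  rewrite vp1.
  have yq : y < q by lia.
  have := @mod_nz p q y cpq y1 yq.
  have ne : y * p %% q != v * p %% q.
    apply/eqP => H.
    have := @inj_mod p q 0 y v cpq _ vq; rewrite !add0n => /(_ _ H); lia.
  rewrite vp1 in ne. lia.
rewrite /=; congr (_ :: _); last first.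
  rewrite -[RHS](filter_pred0 (iota v.+1 (q.-1 - v))).
  apply: eq_in_filter => x; rewrite mem_iota => /andP [x1 x2] /=.
  apply/negbTE/negP => /allP /(_ v).
  rewrite mem_iota.
  have -> : (1 <= v < 1 + x.-1) by lia.
  move=> /(_ isT); rewrite vp1 ltnS leqn0 => /eqP H.
  have xq : x < q by lia.
  have := @mod_nz p q x cpq (ltn_trans v0 x1) xq. by rewrite H.
apply: eq_in_filter => x; rewrite mem_iota => /andP [x1 x2].
apply: eq_in_all => y; rewrite mem_iota => /andP [y1 y2].
have xv : x < v by lia.
have yv : y < v by lia.
have vqq : v <= q by lia.
rewrite -(ltn_pmul2l v0) (@key_formula p q u v x E v0 vqq xv) (@key_formula p q u v y E v0 vqq yv).
apply: cmp_lemma; try lia.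
apply/eqP => H.
have := @inj_mod u v 0 x y cuv xv yv; rewrite !add0n => /(_ H); lia.
Qed.

Lemma ltq_frac a b c d : 0 < b -> 0 < d ->
  ((a%:R / b%:R : rat) < c%:R / d%:R)%R = (a * d < c * b).
Proof.
move=> b0 d0.
by rewrite ltr_pdivrMr ?ltr0n // mulrAC ltr_pdivlMr ?ltr0n // -!natrM ltr_nat.
Qed.

Lemma leq_frac a b c d : 0 < b -> 0 < d ->
  ((a%:R / b%:R : rat) <= c%:R / d%:R)%R = (a * d <= c * b).
Proof.
move=> b0 d0.
by rewrite ler_pdivrMr ?ltr0n // mulrAC ler_pdivlMr ?ltr0n // -!natrM ler_nat.
Qed.

Lemma den_frac p q : 0 < q -> coprime p q -> denq (p%:R / q%:R : rat) = q.
Proof.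
move=> q0 cop.
have := @coprimeq_den (Posz p) (Posz q). rewrite /= cop => /(_ isT) ->.
by case: q q0 {cop}.
Qed.

Lemma foldr_max_eq (s : seq rat) y : (0 <= y)%R -> y \in s ->
  (forall z, z \in s -> (z <= y)%R) -> foldr Num.max 0%R s = y.
Proof.
move=> y0 ys H; apply/le_anti/andP; split.
  elim: s H {ys} => [|z s IH] H /=; first by [].
  rewrite ge_max H ?mem_head // IH // => t ts; apply: H; by rewrite in_cons ts orbT.
elim: s ys {H} => [|z s IH] //=.
rewrite in_cons => /orP [/eqP ->|h]; rewrite le_max; first by rewrite lexx.
by rewrite IH ?orbT.
Qed.

Lemma LFP_val p q u v : 0 < p -> p * 2 < q -> coprime p q ->
  p * v = q * u + 1 -> 0 < v -> v < q ->
  LFP (p%:R / q%:R)%R = (u%:R / v%:R)%R.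
Proof.
move=> p0 pq cop E v0 vq.
have q0 : 0 < q by lia.
rewrite /LFP den_frac //=.
apply: foldr_max_eq.
- by rewrite divr_ge0 ?ler0n.
- rewrite mem_filter ltq_frac //; apply/andP; split; first by lia.
  rewrite /farey_half mem_filter; apply/andP; split.
    rewrite divr_ge0 ?ler0n //=.
    rewrite (_ : (1 / 2 : rat) = 1%:R / 2%:R)%R // leq_frac //.
    nia.
  apply: (@allpairs_f_dep _ (fun _ => nat) _ (fun d i => (i%:R / d%:R : rat)%R)).
    by rewrite mem_iota; lia.
  by rewrite mem_iota; nia.
- move=> z; rewrite mem_filter => /andP [zx]; rewrite /farey_half mem_filter => /andP [_].
  case/allpairsPdep => d [i [dm im Ez]]; subst z.
  move: dm im zx; rewrite !mem_iota => dm im.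
  rewrite ltq_frac ?leq_frac //; try lia.
  move=> h; nia.
Qed.

Definition dens (s : seq rat) := [seq `|denq r|%N | r <- s].

Lemma LFS_aux_val q : forall p f, coprime p q -> p * 2 < q -> q <= f ->
  dens (LFS_aux f (p%:R / q%:R)%R) = Rec p q.
Proof.
elim/ltn_ind: q => q IH p f cop pq qf.
case: f qf => [|f] qf; first by lia.
case: (posnP p) => [p0|p0].
  subst p; move: cop; rewrite /coprime gcd0n => /eqP q1; subst q.
  by [].
have q1 : 1 < q by lia.
have [v [v0 vq vp]] := inv_exists p0 q1 cop.
set u := v * p %/ q.
have E : p * v = q * u + 1.
  have := divn_eq (v * p) q; rewrite vp -/u. lia.
have cuv : coprime u v.
  rewrite /coprime -dvdn1.
  have h1 : gcdn u v %| q * u by rewrite dvdn_mull // dvdn_gcdl.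
  have h2 : gcdn u v %| p * v by rewrite dvdn_mull // dvdn_gcdr.
  by rewrite E dvdn_addr in h2.
have uv : u * 2 < v by nia.
rewrite /= mulf_eq0 invr_eq0 !pnatr_eq0 (negbTE (lt0n_neq0 p0)) (negbTE (lt0n_neq0 (ltnW q1))) /=.
rewrite (LFP_val p0 pq cop E v0 vq) /dens map_rcons.
rewrite (Rec_step cop cuv q1 E v0 vq) den_frac //.
congr rcons.
apply: IH => //; lia.
Qed.

Lemma LFS_val p q : coprime p q -> p * 2 < q ->
  dens (LFS (p%:R / q%:R)%R) = Rec p q.
Proof.
move=> cop pq.
rewrite /LFS den_frac //; last by lia.
apply: LFS_aux_val => //=. nia.
Qed.

Lemma find_eq (T : Type) (a : pred T) x0 s i : i < size s -> a (nth x0 s i) ->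
  (forall j, j < i -> ~~ a (nth x0 s j)) -> find a s = i.
Proof.
move=> hi ai H.
have hs : has a s by apply/(has_nthP x0); exists i.
case: (ltngtP (find a s) i) => // h.
- by have := nth_find x0 hs; rewrite (negbTE (H _ h)).
- by rewrite (before_find x0 h) in ai.
Qed.

Definition phi m n v := m - v * m %% n.

Lemma orbK_lt m n r : coprime m n -> 1 < n -> 0 < m ->
  Defs.orbK m n r 0 < n /\ (r + Defs.orbK m n r 0 * m) %% n = 0.
Proof.
move=> cop n1 m0.
have [v [v0 vn vm]] := inv_exists m0 n1 cop.
set a := n - v.
set c := v * m %/ n.
have E1 : v * m = c * n + 1 by have := divn_eq (v * m) n; rewrite vm.
have E2 : (a * m + 1) + c * n = m * n by rewrite /a; nia.
have D : n %| a * m + 1.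
  have : n %| (a * m + 1) + c * n by rewrite E2 dvdn_mull.
  by rewrite dvdn_addl // dvdn_mull.
have hs : has (fun j => (r + j * m) %% n == 0 %% n) (iota 0 n).
  apply/hasP; exists ((r * a) %% n); first by rewrite mem_iota ltn_mod; lia.
  rewrite mod0n -modnDmr modnMml modnDmr.
  have -> : r + r * a * m = r * (a * m + 1) by lia.
  by rewrite -/(dvdn _ _) dvdn_mull.
have := has_find (fun j => (r + j * m) %% n == 0 %% n) (iota 0 n).
rewrite hs size_iota => /esym lt; split => //.
have := nth_find 0 hs; rewrite nth_iota // add0n mod0n => /eqP.
by rewrite /Defs.orbK mod0n.
Qed.

Lemma seg_uniq m n r : coprime m n -> 1 < n -> 0 < m ->
  uniq (orbit_seg m n r 0).
Proof.
move=> cop n1 m0.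
have [lt _] := orbK_lt r cop n1 m0.
rewrite /orbit_seg map_inj_in_uniq ?iota_uniq // => x y.
rewrite !mem_iota => /andP [_ hx] /andP [_ hy].
apply: inj_mod cop _ _; lia.
Qed.

Lemma size_seg m n r : size (orbit_seg m n r 0) = (Defs.orbK m n r 0).+1.
Proof. by rewrite size_map size_iota. Qed.

Lemma elt m n k j v' v : m < n -> k + v * m %% n = m -> j + v' = v ->
  ((k + j * m) %% n + v' * m %% n) %% n = m.
Proof.
move=> mn E J.
rewrite modnDm -addnA -mulnDl J -modnDmr E modn_small //.
Qed.

Lemma orbK_phi m n v : coprime m n -> 1 < n -> 0 < m -> m < n ->
  0 < v -> v < n -> v * m %% n <= m ->
  Defs.orbK m n (phi m n v) 0 = v.-1.
Proof.
move=> cop n1 m0 mn v0 vn wm.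
rewrite /Defs.orbK; apply: (@find_eq nat _ 0).
- rewrite size_iota; lia.
- rewrite nth_iota ?add0n ?mod0n; last by lia.
  rewrite /phi.
  have E := divn_eq (v * m) n.
  have -> : m - v * m %% n + v.-1 * m = v * m %/ n * n.
    have : v.-1 * m + m = v * m by rewrite addnC -mulSn prednK.
    lia.
  by rewrite modnMl.
- move=> j jv; rewrite nth_iota ?add0n ?mod0n; last by lia.
  apply/negP => /eqP H.
  have J : j + (v - j) = v by lia.
  have E : phi m n v + v * m %% n = m by rewrite /phi; lia.
  have := @elt m n (phi m n v) j (v - j) v mn E J.
  rewrite H add0n modn_mod => h.
  have := @inj_mod m n 0 (v - j) 1 cop _ n1.
  rewrite !add0n mul1n h modn_small // => /(_ _ erefl).
  lia.
Qed.

Lemma Rec_range m n v : v \in Rec m n -> 0 < v /\ v < n.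
Proof. rewrite mem_filter mem_iota => /andP [_ h]; lia. Qed.

Lemma w_le_m m n v : m < n -> v \in Rec m n -> v * m %% n <= m.
Proof.
move=> mn H; have [v0 _] := Rec_range H.
move: H; rewrite mem_filter => /andP [rb _].
case: (ltngtP v 1) => hv; first lia; last by rewrite hv mul1n modn_small.
have := allP rb 1; rewrite mem_iota mul1n (modn_small mn).
have -> : (1 <= 1 < 1 + v.-1) by lia.
move=> /(_ isT); lia.
Qed.

Lemma adm_phi m n v : coprime m n -> 0 < m -> m.*2 < n ->
  v \in Rec m n -> phi m n v \in adm_list m n.
Proof.
move=> cop m0 mn2 vR.
have mn : m < n by lia.
have n1 : 1 < n by lia.
have [v0 vn] := Rec_range vR.
have Wm := w_le_m mn vR.
have W0 := @mod_nz m n v cop v0 vn.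
have Wn : v * m %% n < n by rewrite ltn_mod; lia.
have pm : phi m n v < m by rewrite /phi; lia.
suff hna : ~~ has (fun x => (phi m n v < x) && (x < m)) (orbit_seg m n (phi m n v) 0).
  by rewrite mem_filter mem_iota /admissible leq0n add0n pm hna.
rewrite /orbit_seg (orbK_phi cop n1 m0 mn v0 vn Wm) prednK //.
apply/hasPn => x /mapP [j]; rewrite mem_iota => /andP [_ jv] ->.
apply/negP => /andP [h1 h2].
have J : j + (v - j) = v by lia.
have E : phi m n v + v * m %% n = m by rewrite /phi; lia.
have := @elt m n (phi m n v) j (v - j) v mn E J.
have en : (phi m n v + j * m) %% n < n by rewrite ltn_mod; lia.
have wn : (v - j) * m %% n < n by rewrite ltn_mod; lia.
move=> /(sum_mod en wn mn) [] h; last by lia.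
case: (posnP j) => j0.
  by subst j; rewrite mul0n addn0 (modn_small (ltn_trans pm mn)) ltnn in h1.
move: vR; rewrite mem_filter => /andP [rb _].
have := allP rb (v - j); rewrite mem_iota.
have -> : (1 <= v - j < 1 + v.-1) by lia.
move=> /(_ isT); lia.
Qed.

Lemma adm_inv m n k : coprime m n -> 0 < m -> m.*2 < n ->
  k \in adm_list m n -> exists2 v, v \in Rec m n & k = phi m n v.
Proof.
move=> cop m0 mn2.
have mn : m < n by lia.
have n1 : 1 < n by lia.
rewrite mem_filter mem_iota /admissible => /andP [/andP [km hna] _].
have [lt eq] := orbK_lt k cop n1 m0.
move: hna lt eq; rewrite /orbit_seg.
set K := Defs.orbK m n k 0 => hna lt eq.
set v := K.+1.
have kv : (k + v * m) %% n = m.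
  rewrite /v mulSn (addnC m) addnA -modnDml eq add0n modn_small //.
have kW : (k + v * m %% n) %% n = m by rewrite modnDmr.
have Wn : v * m %% n < n by rewrite ltn_mod; lia.
have kn : k < n by lia.
have E : k + v * m %% n = m.
  by case: (sum_mod kn Wn mn kW) => // h; lia.
have vn : v < n.
  case: (ltngtP v n) => // h; first by lia.
  by move: E; rewrite h mulnC modnMl addn0 => h'; lia.
exists v; last by rewrite /phi; lia.
rewrite mem_filter mem_iota.
have -> : 1 <= v < 1 + n.-1 by rewrite /v; lia.
rewrite andbT; apply/allP => v'; rewrite mem_iota => /andP [v1 v2].
have v'v : v' < v by lia.
rewrite ltnNge; apply/negP => h.
have ne : v' * m %% n != v * m %% n.
  apply/eqP => H.
  have := @inj_mod m n 0 v' v cop (ltn_trans v'v vn) vn; rewrite !add0n => /(_ H); lia.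
have W0 := @mod_nz m n v' cop v1 (ltn_trans v'v vn).
have J : (v - v') + v' = v by lia.
have := @elt m n k (v - v') v' v mn E J.
have en : (k + (v - v') * m) %% n < n by rewrite ltn_mod; lia.
have wn : v' * m %% n < n by rewrite ltn_mod; lia.
move=> /(sum_mod en wn mn) [] h2; last by lia.
move/hasPn: hna => hna.
have jin : v - v' \in iota 0 K.+1 by rewrite mem_iota; rewrite /v in v'v; lia.
have := hna _ (map_f (fun j => (k + j * m) %% n) jin).
move=> /negP; apply; apply/andP.
move: h2 E h ne W0; clear.
set e := (k + (v - v') * m) %% n; set w' := v' * m %% n; set W := v * m %% n.
move=> h2 E h ne W0; split; lia.
Qed.

Lemma adm_eq m n : coprime m n -> 0 < m -> m.*2 < n ->
  adm_list m n = map (phi m n) (Rec m n).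
Proof.
move=> cop m0 mn2.
have mn : m < n by lia.
apply: (@irr_sorted_eq _ ltn ltn_trans ltnn).
- exact: (@sorted_filter _ ltn ltn_trans) _ _ (iota_ltn_sorted 0 m).
- rewrite sorted_map.
  apply: (@sub_in_sorted _ (mem (Rec m n)) ltn); last first.
    exact: (@sorted_filter _ ltn ltn_trans) _ _ (iota_ltn_sorted 1 n.-1).
    by apply/allP.
  move=> x y xR yR xy /=.
  have Wx := w_le_m mn xR.
  have [x0 _] := Rec_range xR.
  move: yR; rewrite mem_filter => /andP [rb _].
  have := allP rb x; rewrite mem_iota.
  have -> : (1 <= x < 1 + y.-1) by lia.
  move=> /(_ isT); rewrite /phi; lia.
- move=> k; apply/idP/idP.
  + move=> /(adm_inv cop m0 mn2) [v vR ->]; exact: map_f.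
  + by move=> /mapP [v vR ->]; apply: adm_phi.
Qed.

Lemma orbK_m m n : coprime m n -> 0 < m -> m < n -> Defs.orbK m n m 0 = n.-1.
Proof.
move=> cop m0 mn.
rewrite /Defs.orbK; apply: (@find_eq nat _ 0).
- rewrite size_iota; lia.
- rewrite nth_iota ?add0n ?mod0n; last by lia.
  have -> : m + n.-1 * m = n * m by rewrite -mulSn prednK //; lia.
  by rewrite mulnC modnMl.
- move=> j jv; rewrite nth_iota ?add0n ?mod0n; last by lia.
  rewrite -mulSn; apply: mod_nz => //; lia.
Qed.

Lemma idx m n v : coprime m n -> 0 < m -> m.*2 < n -> v \in Rec m n ->
  index (phi m n v) (orbit_seg m n m 0) = n - v.
Proof.
move=> cop m0 mn2 vR.
have mn : m < n by lia.
have n1 : 1 < n by lia.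
have [v0 vn] := Rec_range vR.
have Wm := w_le_m mn vR.
have Wn : v * m %% n < n by rewrite ltn_mod; lia.
have e : nth 0 (orbit_seg m n m 0) (n - v) = phi m n v.
  rewrite /orbit_seg (orbK_m cop m0 mn) prednK; last by lia.
  rewrite (nth_map 0) ?size_iota; last by lia.
  rewrite nth_iota ?add0n; last by lia.
  have E0 : m + n * m %% n = m by rewrite mulnC modnMl addn0.
  have J : (n - v) + v = n by lia.
  have := @elt m n m (n - v) v n mn E0 J.
  have en : (m + (n - v) * m) %% n < n by rewrite ltn_mod; lia.
  move=> /(sum_mod en Wn mn); rewrite /phi.
  move: Wm Wn en; clear.
  set e := (m + (n - v) * m) %% n; set W := v * m %% n.
  move=> *; lia.
rewrite -e index_uniq ?seg_uniq // size_seg (orbK_m cop m0 mn); lia.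
Qed.

Theorem lemma2p21 (m n : nat) :
  0 < m -> m.*2 < n -> coprime m n ->
  let s := LFS (m%:R / n%:R : rat)%R in
  let A := adm_list m n in
  size A = size s /\
  (forall i, i < size s ->
     Posz (size (undup (orbit_seg m n (nth 0 A i) 0))) = denq (nth 0%R s i)) /\
  (forall i j, i < j -> j < size s ->
     index (nth 0 A j) (orbit_seg m n m 0) < index (nth 0 A i) (orbit_seg m n m 0)).
Proof.
move=> m0 mn2 cop s A.
have mn : m < n by lia.
have n1 : 1 < n by lia.
have Ds : dens s = Rec m n by apply: LFS_val => //; lia.
have DA : A = map (phi m n) (Rec m n) by apply: adm_eq.
have sz : size s = size (Rec m n) by rewrite -Ds size_map.
split; first by rewrite DA size_map sz.
split.
- move=> i hi.
  have hiR : i < size (Rec m n) by rewrite -sz.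
  rewrite DA (nth_map 0) //.
  have vR := mem_nth 0 hiR.
  have [v0 vn] := Rec_range vR.
  have Wm := w_le_m mn vR.
  rewrite undup_id ?seg_uniq // size_seg (orbK_phi cop n1 m0 mn v0 vn Wm) prednK //.
  have -> : nth 0 (Rec m n) i = `|denq (nth 0%R s i)|%N by rewrite -Ds /dens (nth_map 0%R).
  by rewrite abszE gtr0_norm // denq_gt0.
- move=> i j ij js.
  have jR : j < size (Rec m n) by rewrite -sz.
  have iR : i < size (Rec m n) by lia.
  rewrite DA !(nth_map 0) // !idx // ?mem_nth //.
  have [_ vjn] := Rec_range (mem_nth 0 jR).
  have : nth 0 (Rec m n) i < nth 0 (Rec m n) j.
    have srt : sorted ltn (Rec m n).
      exact: (@sorted_filter _ ltn ltn_trans) _ _ (iota_ltn_sorted 1 n.-1).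
    apply: (@sorted_ltn_nth _ ltn ltn_trans 0 _ srt) => //.
  move: vjn; move: (nth 0 (Rec m n) i) (nth 0 (Rec m n) j) => a b; clear; lia.
Qed.
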